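(* Let $a\neq 0$, $b$ be integers with $\gcd(a,b)=1$, let $k\ge 1$ be an integer, and let $c_1,e_1\in\mathbb{Q}\setminus\{0\}$, $c_0,e_0\in\mathbb{Q}$. Then there is no integer $q\ge 3$ such that the polynomial identity $$S_{a,b}^k(c_1x+c_0)=e_1x^q+e_0$$ holds in $\mathbb{Q}[x]$.
   Context: The Bernoulli polynomials $B_n(x)$ are defined by $\frac{t e^{tx}}{e^t-1}=\sum_{n\ge 0}B_n(x)\frac{t^n}{n!}$. For integers $a\neq 0$, $b$ with $\gcd(a,b)=1$ and an integer $k\ge 1$, define the polynomial $$S_{a,b}^k(x):=\frac{a^k}{k+1}\left(B_{k+1}\!\left(x+\frac{b}{a}\right)-B_{k+1}\!\left(\frac{b}{a}\right)\right)\in\mathbb{Q}[x].$$ *)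

(* Defs.v *)
From HB Require Import structures.
From mathcomp Require Import all_boot all_order all_algebra.
Set Implicit Arguments. Unset Strict Implicit. Unset Printing Implicit Defensive.
Import Order.TTheory GRing.Theory Num.Theory.
Local Open Scope ring_scope.

(* Bernoulli numbers B_n with the convention of t/(e^t - 1) (so B_1 = -1/2),
   via the standard recurrence  sum_{j=0}^{m} C(m+1,j) B_j = 0  (m >= 1), B_0 = 1,
   i.e.  B_m = - 1/(m+1) * sum_{j<m} C(m+1,j) B_j. *)
Fixpoint bern_list (n : nat) : seq rat :=
  match n with
  | 0%N => [:: 1]
  | m.+1 =>
      let s := bern_list m in
      rcons s (- (m.+2%:R)^-1 * \sum_(j < m.+1) ('C(m.+2, j))%:R * nth 0 s j)
  end.

Definition bernoulli_number (n : nat) : rat := nth 0 (bern_list n) n.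

Definition bernoulli_poly (n : nat) : {poly rat} :=
  \sum_(j < n.+1) (('C(n, j))%:R * bernoulli_number j) *: 'X^(n - j).

Definition S_poly (a b : int) (k : nat) : {poly rat} :=
  let r : rat := b%:~R / a%:~R in
  ((a%:~R : rat) ^+ k / (k.+1)%:R) *:
    (bernoulli_poly k.+1 \Po ('X + r%:P) - (bernoulli_poly k.+1).[r]%:P).

(* Main.v *)
Require Import Defs.
From HB Require Import structures.
From mathcomp Require Import all_boot all_order all_algebra ring zify.
Import Order.TTheory GRing.Theory Num.Theory.
Local Open Scope ring_scope.

Lemma coefBP n i : (bernoulli_poly n)`_i =
  if (i <= n)%N then ('C(n, n - i))%:R * bernoulli_number (n - i) else 0.
Proof.
rewrite /bernoulli_poly coef_sum.
under eq_bigr => j _ do rewrite coefZ coefXn.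
case: ifP => hin.
  have hl : (n - i < n.+1)%N by lia.
  rewrite (bigD1 (Ordinal hl)) //= big1 ?addr0.
    by rewrite (_ : i == n - (n - i))%N ?mulr1 //; apply/eqP; lia.
  move=> j hj; rewrite (_ : (i == n - j)%N = false) ?mulr0 //.
  apply/negbTE/negP => /eqP e; move/negP: hj; apply; apply/eqP/val_inj => /=.
  have := ltn_ord j; lia.
rewrite big1 // => j _; rewrite (_ : (i == n - j)%N = false) ?mulr0 //.
apply/negbTE/negP => /eqP e; move/negbT: hin; lia.
Qed.

Lemma coefXC (q : nat) (c : rat) j : (('X + c%:P)^+q)`_j = ('C(q, j))%:R * c ^+ (q - j).
Proof.
have eC : forall i, (c%:P)^+i = (c^+i)%:P by move=> i; rewrite rmorphXn.
rewrite exprDn coef_sum.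
under eq_bigr => i _ do rewrite coefMn eC mulrC coefCM coefXn.
case: (leqP j q) => hjq.
  have hl : (q - j < q.+1)%N by lia.
  rewrite (bigD1 (Ordinal hl)) //= big1 ?addr0.
    rewrite (_ : j == q - (q - j))%N; last by apply/eqP; lia.
    by rewrite mulr1 bin_sub // mulr_natl.
  move=> i hi; rewrite (_ : (j == q - i)%N = false) ?mulr0 ?mul0rn //.
  apply/negbTE/negP => /eqP e; move/negP: hi; apply; apply/eqP/val_inj => /=.
  have := ltn_ord i; lia.
rewrite bin_small // mul0r big1 // => i _.
rewrite (_ : (j == q - i)%N = false) ?mulr0 ?mul0rn //.
apply/negbTE/negP => /eqP e; lia.
Qed.
Lemma B1 : bernoulli_number 1 = - 2^-1. Proof. rewrite /bernoulli_number /= !big_ord_recr !big_ord0 /= !bin0 ?bin1. field; by []. Qed.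
Lemma B2 : bernoulli_number 2 = 6^-1. Proof. rewrite /bernoulli_number /= !big_ord_recr !big_ord0 /= !bin0 ?bin1. field; by []. Qed.

Lemma key (a b : int) (k : nat) (c1 c0 e1 e0 : rat) q :
  a != 0 -> c1 != 0 ->
  S_poly a b k \Po (c1 *: 'X + c0%:P) = e1 *: 'X^q + e0%:P ->
  exists A s B, bernoulli_poly k.+1 = A *: ('X + s%:P)^+q + B%:P.
Proof.
move=> ha hc1 H.
set r : rat := b%:~R / a%:~R.
set l : rat := (a%:~R : rat) ^+ k / (k.+1)%:R.
set P := bernoulli_poly k.+1.
have hl : l != 0.
  by rewrite /l mulf_neq0 ?expf_neq0 ?invr_eq0 ?intr_eq0 ?pnatr_eq0.
set M := c1^-1 *: ('X - (c0 + r)%:P).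
have HM : (c1 *: 'X + c0%:P) \Po M = 'X - r%:P.
  rewrite comp_polyD comp_polyZ comp_polyX comp_polyC /M scalerA mulfV // scale1r.
  rewrite polyCD; ring.
have H2 := congr1 (fun p => p \Po M) H; rewrite /= -comp_polyA HM in H2.
rewrite /S_poly -/r -/l comp_polyZ comp_polyB comp_polyXaddC_K comp_polyC in H2.
rewrite comp_polyD comp_polyZ comp_Xn_poly comp_polyC /M exprZn scalerA in H2.
exists (l^-1 * (e1 * c1^-1 ^+ q)), (- (c0 + r)), (l^-1 * e0 + P.[r]).
have E : P = l^-1 *: (l *: (P - P.[r]%:P)) + P.[r]%:P.
  by rewrite scalerA mulVf // scale1r subrK.
rewrite {1}E H2 scalerDr scalerA -addrA; congr (_ *: _ ^+ _ + _).
  by rewrite polyCN.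
by rewrite polyCD polyCM mul_polyC.
Qed.

Theorem lemma3 (a b : int) (k : nat) (c1 c0 e1 e0 : rat) :
  a != 0 -> gcdz a b = 1%N -> (1 <= k)%N -> c1 != 0 -> e1 != 0 ->
  ~ exists q : nat, (3 <= q)%N /\
      S_poly a b k \Po (c1 *: 'X + c0%:P) = e1 *: 'X^q + e0%:P.
Proof.
move=> ha _ hk hc1 _ [q [hq H]].
have [A [s [B E]]] := key _ _ _ _ _ _ _ _ ha hc1 H.
have cf i : (0 < i)%N -> (bernoulli_poly k.+1)`_i = A * ('C(q,i)%:R * s^+(q-i)).
  case: i => // i _; by rewrite E coefD coefZ coefC coefXC /= addr0.
have top : (bernoulli_poly k.+1)`_k.+1 = 1.
  by rewrite coefBP leqnn subnn bin0 mul1r.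
case: (ltngtP q k.+1) => hqk.
- move: (cf _ (ltn0Sn k)); rewrite top bin_small // mul0r mulr0 => /eqP.
  by rewrite oner_eq0.
- move: (cf _ (leq_trans (isT : (0 < 3)%N) hq)).
  rewrite coefBP leqNgt hqk /= binn subnn expr0 !mulr1 => /esym A0.
  by move: (cf _ (ltn0Sn k)); rewrite top A0 mul0r => /eqP; rewrite oner_eq0.
subst q.
clear H E; case: k hk hq cf top => [|[|k]] // _ _ cf top.
have h1 := cf _ (ltn0Sn k.+2); rewrite top binn subnn expr0 !mulr1 in h1.
have h2 := cf k.+2 isT; rewrite coefBP (_ : (k.+3 - k.+2 = 1)%N) ?binSn ?expr1 ?bin1 ?B1 -?h1 ?mul1r in h2; last by lia.
have h3 := cf k.+1 isT; rewrite coefBP (_ : (k.+3 - k.+1 = 2)%N) ?B2 -?h1 ?mul1r in h3; last by lia.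
have eb : 'C(k.+3, k.+1) = 'C(k.+3, 2).
  by rewrite -(@bin_sub k.+3 2).
rewrite eb ifT in h3; last by lia.
rewrite ifT in h2; last by lia.
have hs : s = - 2^-1.
  apply: (mulfI (_ : k.+3%:R != 0 :> rat)); first by rewrite pnatr_eq0.
  by rewrite -h2.
have hC : 'C(k.+3, 2)%:R != 0 :> rat by rewrite pnatr_eq0 -lt0n bin_gt0.
move: h3; rewrite hs => /(mulfI hC) /eqP.
by rewrite sqrrN expr2 -invfM (inj_eq (can_inj invrK)).
Qed.
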